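(* Let $F$ be a semi-flow on a connected metrizable space $X$ and let $\{S_\alpha\}$ be a collection of $F$-$\Omega$streams. Then: (1) $S_\cap=\bigcap_\alpha S_\alpha$ is an $F$-$\Omega$stream; (2) $\mathcal{R}_{S_\cap}=\bigcap_\alpha\mathcal{R}_{S_\alpha}$; (3) for every node $N$ of $S_\cap$, if $N_\alpha$ denotes the node of $S_\alpha$ containing $N$, then $N=\bigcap_\alpha N_\alpha$.
   Context: A semi-flow on $X$ is a continuous map $F:\mathbb{T}\times X\to X$, $(t,x)\mapsto F^t(x)$, where $\mathbb{T}=\{0,1,2,\dots\}$ or $[0,\infty)$, with $F^0=\mathrm{id}$ and $F^{t_1+t_2}=F^{t_2}\circ F^{t_1}$. Put $\mathcal{O}_F(x)=\{F^t(x)\}$ and $\mathcal{O}_F=\{(x,y):y\in\mathcal{O}_F(x)\}$. An $F$-stream is a reflexive, transitive relation $S$ that is closed in $X\times X$ and contains $\mathcal{O}_F$; write $x\succcurlyeq_S y$ for $(x,y)\in S$ and $\mathrm{Down}_S(x)=\{y:x\succcurlyeq_S y\}$. $S$ is an $\Omega$stream if $\mathrm{Down}_S(x)=\mathcal{O}_F(x)\cup\mathrm{Down}_S(y)$ for every $x$ and every $y\in\mathcal{O}_F(x)$. Write $x\overset{S}{=}y$ if $x\succcurlyeq_S y$ and $y\succcurlyeq_S x$. A point $x$ is $S$-recurrent if $\mathcal{O}_F(x)=\{x\}$ or there is $y\ne x$ with $x\overset{S}{=}y$, and $\mathcal{R}_S$ is the set of such points. The nodes of $S$ are the $\overset{S}{=}$-equivalence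 classes of $\mathcal{R}_S$. *)

(* Defs.v *)
From HB Require Import structures.
From mathcomp Require Import all_boot all_order all_algebra.
From mathcomp Require Import all_classical all_reals all_analysis.
Set Implicit Arguments. Unset Strict Implicit. Unset Printing Implicit Defensive.
Import Order.TTheory GRing.Theory Num.Theory.
Import numFieldTopology.Exports.
Local Open Scope classical_set_scope.
Local Open Scope ring_scope.

Section Flows.
Context {R : realType} {X : topologicalType}.

Definition timeset (disc : bool) : set R :=
  if disc then [set t | exists n : nat, t = n%:R] else [set t | 0 <= t].

Definition semiflow (disc : bool) (F : R -> X -> X) : Prop :=
  {within timeset disc `*` [set: X], continuous (fun p : R * X => F p.1 p.2)}
  /\ (forall x, F 0 x = x)
  /\ (forall t1 t2 x, timeset disc t1 -> timeset disc t2 ->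
        F (t1 + t2) x = F t2 (F t1 x)).

Definition orbit (disc : bool) (F : R -> X -> X) (x : X) : set X :=
  [set F t x | t in timeset disc].

Definition orbit_rel (disc : bool) (F : R -> X -> X) : set (X * X) :=
  [set p | orbit disc F p.1 p.2].

Definition Down (S : set (X * X)) (x : X) : set X := [set y | S (x, y)].

Definition is_stream (disc : bool) (F : R -> X -> X) (S : set (X * X)) : Prop :=
  (forall x, S (x, x))
  /\ (forall x y z, S (x, y) -> S (y, z) -> S (x, z))
  /\ closed S
  /\ orbit_rel disc F `<=` S.

Definition is_Omega_stream (disc : bool) (F : R -> X -> X) (S : set (X * X)) : Prop :=
  is_stream disc F S /\
  (forall x y, orbit disc F x y -> Down S x = orbit disc F x `|` Down S y).

Definition Seq (S : set (X * X)) (x y : X) : Prop := S (x, y) /\ S (y, x).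

Definition recurrent (disc : bool) (F : R -> X -> X) (S : set (X * X)) : set X :=
  [set x | orbit disc F x = [set x] \/ exists y, y <> x /\ Seq S x y].

Definition is_node (disc : bool) (F : R -> X -> X) (S : set (X * X)) (N : set X) : Prop :=
  exists x, recurrent disc F S x /\
    N = [set y | recurrent disc F S y /\ Seq S x y].

End Flows.

(* Main.v *)
Require Import Defs.
From HB Require Import structures.
From mathcomp Require Import all_boot all_order all_algebra.
From mathcomp Require Import all_classical all_reals all_analysis.
From mathcomp Require Import lra.
Import Order.TTheory GRing.Theory Num.Theory.
Import numFieldTopology.Exports.
Local Open Scope classical_set_scope.
Local Open Scope ring_scope.

Section Aux.
Variables (R : realType) (X : topologicalType) (disc : bool) (F : R -> X -> X).

Lemma ts0 : timeset disc (0:R).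
Proof. rewrite /timeset; case: disc => /=; [by exists 0%N | by []]. Qed.

Lemma ts_ge0 (u : R) : timeset disc u -> 0 <= u.
Proof. rewrite /timeset; case: disc => /= [[n ->]|//]; exact: ler0n. Qed.

Lemma tsB (u v : R) : timeset disc u -> timeset disc v -> u <= v -> timeset disc (v - u).
Proof.
rewrite /timeset; case: disc => /= [[n ->] [m ->]|hu hv huv].
  by rewrite ler_nat => h; exists (m - n)%N; rewrite natrB.
by rewrite subr_ge0.
Qed.

Lemma tsD (u v : R) : timeset disc u -> timeset disc v -> timeset disc (u + v).
Proof.
rewrite /timeset; case: disc => /= [[n ->] [m ->]|hu hv].
  by exists (n + m)%N; rewrite natrD.
exact: addr_ge0.
Qed.

Hypothesis hF : semiflow disc F.

Lemma Fcomp t1 t2 x : timeset disc t1 -> timeset disc t2 ->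
  F (t1 + t2) x = F t2 (F t1 x).
Proof. by move=> h1 h2; case: hF => _ [_ H]; apply: H. Qed.

Lemma F0 x : F 0 x = x.
Proof. by case: hF => _ [H _]. Qed.

Variable S : set (X * X).
Hypothesis hS : is_Omega_stream disc F S.

Lemma Srefl x : S (x, x). Proof. exact: hS.1.1. Qed.
Lemma Strans x y z : S (x, y) -> S (y, z) -> S (x, z).
Proof. exact: hS.1.2.1. Qed.
Lemma Sorb x y : Defs.orbit disc F x y -> S (x, y).
Proof. by move=> h; apply: hS.1.2.2.2. Qed.

Lemma orbit_le x u v : timeset disc u -> timeset disc v -> u <= v ->
  S (F u x, F v x).
Proof.
move=> hu hv huv; apply: Sorb; exists (v - u); first exact: tsB.
rewrite -Fcomp //; [by have -> : u + (v - u) = v by lra | exact: tsB].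
Qed.

Lemma periodic x p : timeset disc p -> 0 < p -> F p x = x ->
  forall u, timeset disc u -> S (F u x, x).
Proof.
move=> tp p0 Fp.
suff H : forall k u, timeset disc u -> u <= k%:R * p -> S (F u x, x).
  move=> u tu; apply: (H (Num.Def.archi_bound (u / p)) u tu).
  have := archi_boundP (divr_ge0 (@ts_ge0 u tu) (ltW p0)).
  by rewrite ltr_pdivrMr // => /ltW.
elim=> [|k IH] u tu hu.
  have -> : u = 0 by apply/eqP; rewrite eq_le ts_ge0 // andbT; rewrite mul0r in hu.
  by rewrite F0; apply: Srefl.
case: (leP u p) => [hup|hpu].
  by have := orbit_le x u p tu tp hup; rewrite Fp.
have tup : timeset disc (u - p) by apply: tsB => //; exact: ltW.
have -> : F u x = F (u - p) x.
  by have := Fcomp p (u - p) x tp tup; rewrite subrKC Fp.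
apply: IH => //; rewrite lerBlDr; move: hu; rewrite -natr1 mulrDl mul1r.
by [].
Qed.

Lemma keyL x : recurrent disc F S x -> Defs.orbit disc F x <> [set x] ->
  forall t, timeset disc t -> S (F t x, x).
Proof.
case=> [//|[ya [neq [xya yax]]]] _ t tt.
have E := hS.2 x (F t x) (ex_intro2 _ _ t tt erefl).
have : Down S x ya by [].
rewrite E => -[[s ts hs]|h]; last exact: Strans h yax.
subst ya.
case: (leP t s) => [hts|hst].
  exact: Strans (orbit_le x t s tt ts hts) yax.
have E2 : Down S (F s x) = Defs.orbit disc F (F s x) `|` Down S (F t x).
  apply: hS.2; exists (t - s); first by apply: tsB => //; exact: ltW.
  by rewrite -Fcomp //; [rewrite subrKC | apply: tsB => //; exact: ltW].
have : Down S (F s x) x by [].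
rewrite E2 => -[[r tr hr]|//].
have s0 : 0 < s.
  rewrite lt_neqAle ts_ge0 // andbT; apply/eqP => s0.
  by apply: neq; rewrite -s0 F0.
apply: (periodic x (s + r) (tsD s r ts tr) _ _ t tt).
- have := @ts_ge0 r tr; lra.
- by rewrite Fcomp.
Qed.

End Aux.
Arguments Srefl {R X disc F S} hS x.
Arguments Strans {R X disc F S} hS {x y z}.
Arguments Sorb {R X disc F S} hS {x y}.
Arguments keyL {R X disc F} hF {S} hS {x}.

Theorem proposition27 (R : realType) (X : metricType R) (disc : bool)
  (F : R -> X -> X) (I : Type) (S : I -> set (X * X)) :
  connected [set: X] ->
  semiflow disc F ->
  (forall a, is_Omega_stream disc F (S a)) ->
  let Scap := \bigcap_(a in [set: I]) S a in
  [/\ is_Omega_stream disc F Scap,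
      recurrent disc F Scap = \bigcap_(a in [set: I]) recurrent disc F (S a)
    & forall N : set X, is_node disc F Scap N ->
      forall Na : I -> set X,
        (forall a, is_node disc F (S a) (Na a) /\ N `<=` Na a) ->
        N = \bigcap_(a in [set: I]) Na a].
Proof.
move=> _ hF hS Scap.
have P1 : is_Omega_stream disc F Scap.
  split; first split.
  - by move=> x a _; apply: Srefl.
  - split; first by move=> x y z h1 h2 a _; exact: (Strans (hS a) (h1 a Logic.I) (h2 a Logic.I)).
    split; first by apply: closed_bigI => a _; exact: (hS a).1.2.2.1.
    by move=> p hp a _; apply: (hS a).1.2.2.2.
  move=> x y hxy; apply/seteqP; split => z /=.
  - move=> hz; have [zo|nzo] := pselect (Defs.orbit disc F x z); [by left|right].
    move=> a _; have : Down (S a) x z := hz a Logic.I.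
    by rewrite ((hS a).2 x y hxy) => -[].
  - case=> [zo|hz] a _.
      have : (Defs.orbit disc F x `|` Down (S a) y) z by left.
      by rewrite -((hS a).2 x y hxy).
    have : (Defs.orbit disc F x `|` Down (S a) y) z by right; exact: hz a Logic.I.
    by rewrite -((hS a).2 x y hxy).
have P2 : recurrent disc F Scap = \bigcap_(a in [set: I]) recurrent disc F (S a).
  apply/seteqP; split => x /=.
  - case=> [eq|[y [ne [h1 h2]]]] a _; first by left.
    by right; exists y; split => //; split; [exact: h1 a Logic.I|exact: h2 a Logic.I].
  - move=> hx; have [eq|neq] := pselect (Defs.orbit disc F x = [set x]); [by left|right].
    case: (pselect (exists t, timeset disc t /\ F t x <> x)) => [[t [ht hne]]|nex].
      exists (F t x); split => //; split => a _.
        by apply: (Sorb (hS a)); exists t.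
      exact: (keyL hF (hS a) (hx a Logic.I) neq).
    exfalso; apply: neq; apply/seteqP; split => z /=.
      case=> t ht <-; case: (pselect (F t x = x)) => // hne.
      by exfalso; apply: nex; exists t.
    by move=> ->; exists 0; [exact: ts0 | case: hF => _ [H _]; exact: H].
split => //.
move=> N [x [rx ->]] Na hNa; apply/seteqP; split.
  by move=> y hy a _; exact: (hNa a).2 _ hy.
move=> y hy.
have xN : [set y | recurrent disc F Scap y /\ Seq Scap x y] x.
  by split => //; split; apply: P1.1.1.
split.
  rewrite P2 => a _; case: (hNa a) => [[xa [rxa eqa]] sub].
  by have := hy a Logic.I; rewrite eqa => -[].
split => a _; case: (hNa a) => [[xa [rxa eqa]] sub];
  have := hy a Logic.I; have := sub x xN; rewrite eqa => -[_ [hxa hax]] [_ [hya hay]].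
  exact: (Strans (hS a)) hax hya.
exact: (Strans (hS a)) hay hxa.
Qed.
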